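(* Let $\mathbf Q$, $(Z_n)$ be as in the context. For all $k\ge0$ and $n\ge1$, $\mathbf Q[Z_1\le k\mid Z_n=0]\ge\mathbf Q[Z_1\le k]$. In particular, $E_{\mathbf Q}[Z_i\mid Z_n=0]\le\mathbf f'(q)^i$ for all $i\ge0$ and $n\ge1$.
   Context: $(p_k)_{k\ge0}$ is a probability distribution on $\{0,1,\dots\}$ with generating function $\mathbf f$, $p_0>0$ and $\mathbf f'(1)\in(1,\infty)$; $q\in(0,1)$ is its extinction probability ($\mathbf f(q)=q$). $\mathbf Q$ is the law of a Galton–Watson tree with offspring distribution $q_k=p_kq^{k-1}$, $k\ge0$, which has mean $\mathbf f'(q)<1$; $Z_n$ denotes the number of vertices in generation $n$ ($Z_0=1$). *)

(* Defs.v *)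
(* generation sizes of a Galton-Watson tree,
   described through their (Markov-chain) finite-dimensional laws. *)
From mathcomp Require Import all_boot all_order all_algebra.
From mathcomp Require Import all_classical all_reals all_analysis.
Set Implicit Arguments. Unset Strict Implicit. Unset Printing Implicit Defensive.
Import Order.TTheory GRing.Theory Num.Theory.
Local Open Scope ring_scope.
Local Open Scope ereal_scope.

Section GW.
Variable R : realType.

Definition is_pmf (p : nat -> R) : Prop :=
  (forall k, (0 <= p k)%R) /\ \sum_(0 <= k <oo) (p k)%:E = 1.

Definition genfun (p : nat -> R) (s : R) : \bar R :=
  \sum_(0 <= k <oo) (p k * s ^+ k)%:E.

Definition mean (p : nat -> R) : \bar R :=
  \sum_(0 <= k <oo) (k%:R * p k)%:E.

(* the conditioned offspring law q_k = p_k q^(k-1) *)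
Definition qlaw (p : nat -> R) (q : R) (k : nat) : R := p k * q^-1 * q ^+ k.

(* a-fold convolution power of an offspring law o: law of the total
   number of children of a individuals *)
Fixpoint conv (o : nat -> R) (a : nat) (b : nat) : R :=
  match a with
  | 0 => (b == 0%N)%:R
  | a'.+1 => (\sum_(i < b.+1) o i * conv o a' (b - i))%R
  end.

(* n-step transition probabilities of the generation-size chain:
   kpow o n a b = P(Z_{m+n} = b | Z_m = a) *)
Fixpoint kpow (o : nat -> R) (n : nat) (a b : nat) : \bar R :=
  match n with
  | 0 => ((a == b)%:R)%:E
  | n'.+1 => \sum_(0 <= c <oo) (kpow o n' a c * (conv o c b)%:E)
  end.

(* two-time joint law P(Z_i = a, Z_n = b) for the process started at Z_0 = 1 *)
Definition jointZ (o : nat -> R) (i n a b : nat) : \bar R :=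
  if (i <= n)%N then kpow o i 1 a * kpow o (n - i) a b
  else kpow o n 1 b * kpow o (i - n) b a.

Definition probZ (o : nat -> R) (n b : nat) : \bar R := kpow o n 1 b.

Definition prob_Z1_le (o : nat -> R) (k : nat) : \bar R :=
  \sum_(0 <= a < k.+1) probZ o 1 a.

Definition cond_Z1_le (o : nat -> R) (k n : nat) : \bar R :=
  (\sum_(0 <= a < k.+1) jointZ o 1 n a 0) * (probZ o n 0)^-1.

Definition condexp_Zi (o : nat -> R) (i n : nat) : \bar R :=
  (\sum_(0 <= a <oo) (a%:R)%:E * jointZ o i n a 0) * (probZ o n 0)^-1.

End GW.

(* Main.v *)
Require Import Defs.
From mathcomp Require Import all_boot all_order all_algebra.
From mathcomp Require Import all_classical all_reals all_analysis.
From mathcomp Require Import lra ring.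
Import Order.TTheory GRing.Theory Num.Theory.
Local Open Scope ring_scope.
Local Open Scope ereal_scope.
Section Aux.
Variable R : realType.
Implicit Types (f : nat -> \bar R).

Lemma series_single f a : (forall i, 0 <= f i) -> (forall i, i != a -> f i = 0) ->
  \sum_(i <oo) f i = f a.
Proof.
move=> f0 fa; rewrite (@nneseriesD1 _ f a xpredT) //.
by rewrite eseries0 ?adde0 // => i _ /andP[_ ia]; exact: fa.
Qed.

Lemma series_fin f n : (forall i, 0 <= f i) -> (forall i, (n <= i)%N -> f i = 0) ->
  \sum_(i <oo) f i = \sum_(0 <= i < n) f i.
Proof.
move=> f0 fn; rewrite (nneseries_split 0 n) // add0n.
by rewrite eseries0 ?adde0 // => i ni _; exact: fn.
Qed.

Lemma cauchy_prod (x y : nat -> R) : (forall i, (0 <= x i)%R) -> (forall j, (0 <= y j)%R) ->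
  \sum_(b <oo) (\sum_(i < b.+1) x i * y (b - i)%N)%:E =
  \sum_(i <oo) ((x i)%:E * \sum_(j <oo) (y j)%:E).
Proof.
move=> x0 y0.
transitivity (\sum_(b <oo) \sum_(i <oo)
   (if (i <= b)%N then (x i * y (b - i)%N)%:E else 0)).
  apply: eq_eseriesr => b _.
  rewrite (@series_fin _ b.+1); last 2 first.
  - by move=> i; case: ifP => // _; rewrite lee_fin mulr_ge0.
  - by move=> i bi; rewrite leqNgt bi.
  rewrite -sumEFin big_mkord; apply: eq_bigr => i _.
  by rewrite -ltnS ltn_ord.
rewrite nneseries_interchange; last first.
  by move=> i j; case: ifP => // _; rewrite lee_fin mulr_ge0.
apply: eq_eseriesr => i _.
rewrite (nneseries_split 0 i); last first.
  by move=> k _; case: ifP => // _; rewrite lee_fin mulr_ge0.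
rewrite add0n big1_seq ?add0e; last first.
  by move=> k; rewrite mem_index_iota => /and3P[_ _ ki]; rewrite leqNgt ki.
rewrite -(@nneseries_addn _ (fun k => if (i <= k)%N then (x i * y (k - i)%N)%:E else 0) i); last first.
  by move=> k; case: ifP => // _; rewrite lee_fin mulr_ge0.
rewrite -nneseriesZl; last by move=> j _; rewrite lee_fin.
apply: eq_eseriesr => j _.
by rewrite leq_addl addnK.
Qed.

End Aux.

Section Aux2.
Variable R : realType.

Lemma term_le_series (f : nat -> \bar R) k : (forall i, 0 <= f i) ->
  f k <= \sum_(i <oo) f i.
Proof.
by move=> f0; rewrite (@nneseriesD1 _ f k xpredT)// leeDl// nneseries_ge0.
Qed.

Variable o : nat -> R.
Hypothesis o_ge0 : forall k, (0 <= o k)%R.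
Hypothesis o_sum : \sum_(k <oo) (o k)%:E = 1.
Hypothesis o0_gt0 : (0 < o 0%N)%R.

Definition Fe (s : R) : \bar R := \sum_(k <oo) (o k * s ^+ k)%:E.
Definition F (s : R) : R := fine (Fe s).

Lemma F_prop s : (0 <= s <= 1)%R -> Fe s = (F s)%:E /\ (o 0%N <= F s <= 1)%R.
Proof.
move=> /andP[s0 s1].
have t0 k : 0 <= (o k * s ^+ k)%:E by rewrite lee_fin mulr_ge0 // exprn_ge0.
have h1 : Fe s <= 1.
  rewrite -o_sum; apply: lee_nneseries => // k _.
  by rewrite lee_fin -[leRHS]mulr1 ler_wpM2l // exprn_ile1.
have h0 : (o 0%N)%:E <= Fe s.
  by have := @term_le_series _ 0%N t0; rewrite expr0 mulr1.
have hfin : Fe s \is a fin_num.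
  apply/fin_numPlt; rewrite (lt_le_trans _ h0) ?ltNyr //=.
  by rewrite (le_lt_trans h1) // ltry.
have eF : Fe s = (F s)%:E by rewrite /F fineK.
by split => //; rewrite -!lee_fin -eF h0 h1.
Qed.

Lemma F01 s : (0 <= s <= 1)%R -> (0 <= F s <= 1)%R.
Proof.
move=> /F_prop[_ /andP[h1 h2]]; rewrite h2 andbT.
exact: le_trans (o_ge0 0%N) h1.
Qed.

Lemma iterF01 n s : (0 <= s <= 1)%R -> (0 <= iter n F s <= 1)%R.
Proof. by move=> hs; elim: n => //= n IH; exact: F01. Qed.

Lemma conv_ge0 c b : (0 <= Defs.conv o c b)%R.
Proof.
elim: c b => [b|c IH b] /=; first by case: (b == 0%N).
by apply: sumr_ge0 => i _; rewrite mulr_ge0.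
Qed.

Lemma conv_gf c s : (0 <= s <= 1)%R ->
  \sum_(b <oo) (Defs.conv o c b * s ^+ b)%:E = (F s ^+ c)%:E.
Proof.
move=> hs; have /andP[s0 s1] := hs.
elim: c => [|c IH].
  rewrite (@series_single _ _ 0%N) /= ?mul1r ?expr0 //.
    by move=> i; rewrite lee_fin mulr_ge0 // ?exprn_ge0 //; case: (i == 0%N).
  by move=> i /negPf ->; rewrite mul0r.
transitivity (\sum_(b <oo) (\sum_(i < b.+1) (o i * s ^+ i) *
                      (Defs.conv o c (b - i)%N * s ^+ (b - i)%N))%:E).
  apply: eq_eseriesr => b _ /=; congr (_%:E).
  rewrite big_distrl /=; apply: eq_bigr => i _.
  rewrite mulrACA -exprD subnKC //; by rewrite -ltnS ltn_ord.
rewrite (@cauchy_prod R (fun i => (o i * s ^+ i)%R) (fun j => (Defs.conv o c j * s ^+ j)%R)); last 2 first.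
- by move=> i; rewrite mulr_ge0 // exprn_ge0.
- by move=> j; rewrite mulr_ge0 // ?conv_ge0 // exprn_ge0.
rewrite IH.
transitivity (\sum_(i <oo) (F s ^+ c)%:E * (o i * s ^+ i)%:E).
  by apply: eq_eseriesr => i _; rewrite muleC.
rewrite nneseriesZl; last by move=> i _; rewrite lee_fin mulr_ge0 // exprn_ge0.
by rewrite -/(Fe s) (F_prop s hs).1 -EFinM exprSr.
Qed.


Lemma kpow_ge0 n a b : 0 <= kpow o n a b.
Proof.
elim: n a b => [a b|n IH a b] /=; first by rewrite lee_fin; case: (a == b).
apply: nneseries_ge0 => c _ _; apply: mule_ge0 => //; have := conv_ge0 c b; rewrite -lee_fin; exact.
Qed.

Definition G n a s := \sum_(b <oo) kpow o n a b * (s ^+ b)%:E.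

Lemma kpow_gf n : forall a s, (0 <= s <= 1)%R -> G n a s = ((iter n F s) ^+ a)%:E.
Proof.
elim: n => [a s hs|n IH a s hs].
  have /andP[s0 s1] := hs.
  rewrite /G (@series_single _ _ a) /=.
  - by rewrite eqxx mul1e.
  - by move=> i; rewrite mule_ge0 ?kpow_ge0 // lee_fin exprn_ge0.
  - by move=> i ia; rewrite eq_sym (negPf ia) mul0e.
have /andP[s0 s1] := hs.
have h01 : (0 <= (1:R) <= 1)%R by rewrite ler01 lexx.
have kfin c : kpow o n a c = (fine (kpow o n a c))%:E.
  have := IH a 1%R h01; rewrite /G => eG.
  have := @term_le_series (fun b => kpow o n a b * ((1:R) ^+ b)%:E) c.
  rewrite eG expr1n mule1 => /(_ (fun i => ltac:(by rewrite expr1n mule1 kpow_ge0))) hle.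
  rewrite fineK //; apply/fin_numPlt; rewrite (lt_le_trans _ (kpow_ge0 _ _ _)) ?ltNyr //=.
  by rewrite (le_lt_trans hle) // ltry.
rewrite /G /=.
transitivity (\sum_(b <oo) \sum_(c <oo)
   (fine (kpow o n a c) * (Defs.conv o c b * s ^+ b))%:E).
  apply: eq_eseriesr => b _; rewrite muleC -nneseriesZl; last first.
    by move=> c _; rewrite mule_ge0 ?kpow_ge0 // lee_fin conv_ge0.
  apply: eq_eseriesr => c _; rewrite [kpow o n a c]kfin -!EFinM; congr (_%:E).
  by rewrite /= mulrC -mulrA.
rewrite nneseries_interchange; last first.
  by move=> c b; rewrite lee_fin mulr_ge0 ?fine_ge0 ?kpow_ge0 // mulr_ge0 ?conv_ge0 // exprn_ge0.
transitivity (\sum_(c <oo) kpow o n a c * ((F s) ^+ c)%:E).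
  apply: eq_eseriesr => c _; under eq_eseriesr do rewrite EFinM.
  rewrite nneseriesZl; last first.
    by move=> b _; rewrite lee_fin mulr_ge0 ?conv_ge0 // exprn_ge0.
  by rewrite (conv_gf c s hs) -kfin.
by rewrite -/(G n a (F s)) IH ?F01 // -iterSr.
Qed.


Lemma kpow_fin n a b : kpow o n a b = (fine (kpow o n a b))%:E.
Proof.
have h01 : (0 <= (1:R) <= 1)%R by rewrite ler01 lexx.
have := kpow_gf n a 1%R h01; rewrite /G => eG.
have := @term_le_series (fun b => kpow o n a b * ((1:R) ^+ b)%:E) b.
rewrite eG expr1n mule1 => /(_ (fun i => ltac:(by rewrite expr1n mule1 kpow_ge0))) hle.
rewrite fineK //; apply/fin_numPlt; rewrite (lt_le_trans _ (kpow_ge0 _ _ _)) ?ltNyr //=.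
by rewrite (le_lt_trans hle) // ltry.
Qed.

Lemma kpow_a0 n a : kpow o n a 0%N = ((iter n F 0) ^+ a)%:E.
Proof.
have h0 : (0 <= (0:R) <= 1)%R by rewrite lexx ler01.
rewrite -(kpow_gf n a 0%R h0) /G (@series_single _ _ 0%N).
- by rewrite expr0 mule1.
- by move=> i; rewrite mule_ge0 ?kpow_ge0 // lee_fin exprn_ge0.
- by move=> i i0; rewrite expr0n (negPf i0) mule0.
Qed.

Lemma conv1 a : Defs.conv o 1 a = o a.
Proof.
rewrite /= big_ord_recr /= subnn eqxx mulr1 big1 ?add0r // => i _.
by rewrite subn_eq0 leqNgt ltn_ord mulr0.
Qed.

Lemma kpow11 a : kpow o 1 1 a = (o a)%:E.
Proof.
rewrite /= (@series_single _ _ 1%N).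
- by rewrite eqxx mul1e conv1.
- by move=> i; rewrite mule_ge0 // lee_fin ?conv_ge0 //; case: (1 == i)%N.
- by move=> i i1; rewrite eq_sym (negPf i1) mul0e.
Qed.

Lemma kpow0 k a : kpow o k 0 a = ((a == 0%N)%:R)%:E.
Proof.
elim: k a => [a|k IH a] /=; first by rewrite eq_sym.
rewrite (@series_single _ _ 0%N) /= ?IH /= ?mul1e //.
- by move=> i; rewrite mule_ge0 ?kpow_ge0 // lee_fin conv_ge0.
- by move=> i i0; rewrite IH (negPf i0) mul0e.
Qed.


Variable mr : R.
Hypothesis hm : \sum_(k <oo) (k%:R * o k)%:E = mr%:E.

Definition De (s : R) : \bar R := \sum_(b <oo) (b%:R * o b * s ^+ b)%:E.
Definition D (s : R) : R := fine (De s).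

Lemma mr_ge0 : (0 <= mr)%R.
Proof.
rewrite -lee_fin -hm; apply: nneseries_ge0 => k _ _.
by rewrite lee_fin mulr_ge0.
Qed.

Lemma D_prop s : (0 <= s <= 1)%R -> De s = (D s)%:E /\ (0 <= D s)%R.
Proof.
move=> /andP[s0 s1].
have t0 b : 0 <= (b%:R * o b * s ^+ b)%:E by rewrite lee_fin !mulr_ge0 // exprn_ge0.
have h0 : 0 <= De s by apply: nneseries_ge0 => b _ _.
have h1 : De s <= mr%:E.
  rewrite -hm; apply: lee_nneseries => // b _.
  by rewrite lee_fin -[leRHS]mulr1 ler_wpM2l ?mulr_ge0 // exprn_ile1.
have hfin : De s \is a fin_num.
  apply/fin_numPlt; rewrite (lt_le_trans _ h0) ?ltNyr //=.
  by rewrite (le_lt_trans h1) // ltry.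
have eD : De s = (D s)%:E by rewrite /D fineK.
by split => //; rewrite -lee_fin -eD.
Qed.

Lemma convD c s : (0 <= s <= 1)%R ->
  \sum_(b <oo) (b%:R * Defs.conv o c b * s ^+ b)%:E = (c%:R * F s ^+ c.-1 * D s)%:E.
Proof.
move=> hs; have /andP[s0 s1] := hs.
elim: c => [|c IH].
  rewrite mul0r mul0r eseries0 // => b _ _ /=.
  by case: b => [|b]; rewrite /= ?mul0r ?mulr0 ?mul0r.
transitivity (\sum_(b <oo)
  ((\sum_(i < b.+1) (i%:R * o i * s ^+ i) * (Defs.conv o c (b - i)%N * s ^+ (b - i)%N))%:E
 + (\sum_(i < b.+1) (o i * s ^+ i) * ((b - i)%N%:R * Defs.conv o c (b - i)%N * s ^+ (b - i)%N))%:E)).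
  apply: eq_eseriesr => b _ /=; rewrite -EFinD -big_split /=; congr (_%:E).
  rewrite big_distrr big_distrl /=; apply: eq_bigr => i _.
  have ib : (i <= b)%N by rewrite -ltnS ltn_ord.
  move: (nat_of_ord i) ib => k kb; clear i.
  move: (b - k)%N (subnKC kb) => j <-.
  by rewrite natrD exprD; ring.
rewrite nneseriesD; last 2 first.
- by move=> b _ _; rewrite lee_fin sumr_ge0 // => i _; rewrite !mulr_ge0 ?conv_ge0 // exprn_ge0.
- by move=> b _ _; rewrite lee_fin sumr_ge0 // => i _; rewrite !mulr_ge0 ?conv_ge0 // exprn_ge0.
rewrite (@cauchy_prod R (fun i => (i%:R * o i * s ^+ i)%R) (fun j => (Defs.conv o c j * s ^+ j)%R)); last 2 first.
- by move=> i; rewrite !mulr_ge0 // exprn_ge0.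
- by move=> j; rewrite mulr_ge0 // ?conv_ge0 // exprn_ge0.
rewrite (@cauchy_prod R (fun i => (o i * s ^+ i)%R) (fun j => (j%:R * Defs.conv o c j * s ^+ j)%R)); last 2 first.
- by move=> i; rewrite !mulr_ge0 // exprn_ge0.
- by move=> j; rewrite !mulr_ge0 // ?conv_ge0 // exprn_ge0.
rewrite (conv_gf c s hs) IH.
under eq_eseriesr do rewrite muleC.
rewrite nneseriesZl; last by move=> i _; rewrite lee_fin !mulr_ge0 // exprn_ge0.
under [X in _ + X = _]eq_eseriesr do rewrite muleC.
rewrite nneseriesZl; last by move=> i _; rewrite lee_fin !mulr_ge0 // exprn_ge0.
rewrite -/(De s) -/(Fe s) (D_prop s hs).1 (F_prop s hs).1 -!EFinM -EFinD; congr (_%:E).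
case: c {IH} => [|c] /=; first by rewrite !expr0 !mul0r addr0 !mul1r.
by rewrite exprSr -[c.+2]addn1 natrD; ring.
Qed.


Lemma D_le s : (0 <= s <= 1)%R -> (D s <= mr * F s)%R.
Proof.
move=> hs; have /andP[s0 s1] := hs.
set K := (Num.truncn mr).+1.
have tl : ((Num.truncn mr)%:R <= mr)%R by rewrite truncn_le mr_ge0.
set t := (s ^+ K)%R.
have t0 : (0 <= t)%R by rewrite exprn_ge0.
have term b : (b%:R * o b * s ^+ b + mr * t * o b <= t * (b%:R * o b) + mr * (o b * s ^+ b))%R.
  have h : ((b%:R - mr) * (s ^+ b - t) <= 0)%R.
    have [Kb|bK] := leqP K b.
    - apply: mulr_ge0_le0.
        rewrite subr_ge0; apply: ltW; apply: (lt_le_trans (truncnS_gt mr)).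
        by rewrite ler_nat.
      by rewrite subr_le0 /t ler_wiXn2l.
    - apply: mulr_le0_ge0.
        rewrite subr_le0; apply: (le_trans _ tl).
        by rewrite ler_nat -ltnS.
      by rewrite subr_ge0 /t ler_wiXn2l // ltnW.
  have ob := o_ge0 b; have sb : (0 <= s ^+ b)%R by rewrite exprn_ge0.
  nra.
have e1 : \sum_(b <oo) ((mr * t) * o b)%:E = (mr * t)%:E.
  under eq_eseriesr do rewrite EFinM.
  by rewrite nneseriesZl ?o_sum ?mule1 // => b _; rewrite lee_fin.
have e2 : \sum_(b <oo) (t * (b%:R * o b))%:E = (t * mr)%:E.
  under eq_eseriesr do rewrite EFinM.
  by rewrite nneseriesZl ?hm // => b _; rewrite lee_fin mulr_ge0.
have e3 : \sum_(b <oo) (mr * (o b * s ^+ b))%:E = (mr * F s)%:E.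
  under eq_eseriesr do rewrite EFinM.
  by rewrite nneseriesZl -/(Fe s) ?(F_prop s hs).1 // => b _; rewrite lee_fin mulr_ge0 // exprn_ge0.
have mr0 := mr_ge0.
have hsum : De s + (mr * t)%:E <= (t * mr)%:E + (mr * F s)%:E.
  rewrite -e1 -e2 -e3 /De -!nneseriesD.
  - apply: lee_nneseries => b _; last by rewrite -!EFinD lee_fin term.
    by rewrite -EFinD lee_fin addr_ge0 ?mulr_ge0 ?exprn_ge0.
  - by move=> b _ _; rewrite lee_fin !mulr_ge0.
  - by move=> b _ _; rewrite lee_fin !mulr_ge0 ?exprn_ge0.
  - by move=> b _ _; rewrite lee_fin !mulr_ge0 ?exprn_ge0.
  - by move=> b _ _; rewrite lee_fin !mulr_ge0.
rewrite (D_prop s hs).1 -!EFinD lee_fin in hsum.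
lra.
Qed.


Definition Wt i (s : R) : \bar R :=
  \sum_(a <oo) (a%:R)%:E * (kpow o i 1 a * (s ^+ a)%:E).

Lemma Wt0 s : (0 <= s)%R -> Wt 0 s = s%:E.
Proof.
move=> s0.
rewrite /Wt (@series_single _ _ 1%N) /=.
- by rewrite /= !mul1e expr1.
- move=> a; apply: mule_ge0; first by rewrite lee_fin ler0n.
  by apply: mule_ge0; rewrite lee_fin ?exprn_ge0 //; case: (1 == a)%N.
- by move=> a a1; rewrite eq_sym (negPf a1) mul0e mule0.
Qed.

Lemma Wt_ge0 i s : (0 <= s)%R -> 0 <= Wt i s.
Proof.
move=> s0; apply: nneseries_ge0 => a _ _.
by rewrite mule_ge0 ?lee_fin // mule_ge0 ?kpow_ge0 // lee_fin exprn_ge0.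
Qed.

Lemma Wt_bound i : forall s, (0 <= s <= 1)%R -> Wt i s <= (mr ^+ i * iter i F s)%:E.
Proof.
elim: i => [s hs|i IH s hs]; first by rewrite Wt0 ?expr0 ?mul1r // (andP hs).1.
have /andP[s0 s1] := hs.
have e1 : Wt i.+1 s = \sum_(c <oo) (fine (kpow o i 1 c))%:E * (c%:R * F s ^+ c.-1 * D s)%:E.
  rewrite /Wt /=.
  transitivity (\sum_(b <oo) \sum_(c <oo)
     (fine (kpow o i 1 c) * (b%:R * Defs.conv o c b * s ^+ b))%:E).
    apply: eq_eseriesr => b _.
    rewrite muleCA muleC -EFinM -nneseriesZl; last first.
      by move=> c _; rewrite mule_ge0 ?kpow_ge0 // lee_fin conv_ge0.
    apply: eq_eseriesr => c _; rewrite [kpow o i 1 c]kpow_fin -!EFinM /=.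
    by congr (_%:E); ring.
  rewrite nneseries_interchange; last first.
    by move=> b c; rewrite lee_fin mulr_ge0 ?fine_ge0 ?kpow_ge0 // !mulr_ge0 ?conv_ge0 // exprn_ge0.
  apply: eq_eseriesr => c _; under eq_eseriesr do rewrite EFinM.
  rewrite nneseriesZl ?(convD c s hs) // => b _.
  by rewrite lee_fin !mulr_ge0 ?conv_ge0 // exprn_ge0.
have Fs := F_prop s hs; have [_ /andP[FL FU]] := Fs.
have Fpos : (0 < F s)%R by apply: lt_le_trans FL.
have Fs01 : (0 <= F s <= 1)%R by rewrite FU (ltW Fpos).
have [_ D0] := D_prop s hs.
have e2 : (F s)%:E * Wt i.+1 s = (D s)%:E * Wt i (F s).
  rewrite e1 -nneseriesZl; last first.
    move=> c _; rewrite mule_ge0 // lee_fin ?fine_ge0 ?kpow_ge0 //.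
    by rewrite !mulr_ge0 // exprn_ge0 // ltW.
  rewrite /Wt -nneseriesZl; last first.
    move=> c _; rewrite mule_ge0 // ?lee_fin //.
    by rewrite mule_ge0 ?kpow_ge0 // lee_fin exprn_ge0 // ltW.
  apply: eq_eseriesr => c _; rewrite [kpow o i 1 c]kpow_fin -!EFinM /=.
  congr (_%:E); case: c => [|c] /=; first by (rewrite !(mul0r, mulr0); ring).
  by rewrite exprS; ring.
have hb : (F s)%:E * Wt i.+1 s <= (F s)%:E * (mr ^+ i.+1 * iter i.+1 F s)%:E.
  rewrite e2; apply: (le_trans (lee_wpmul2l _ (IH _ Fs01))); first by rewrite lee_fin.
  rewrite -!EFinM lee_fin -iterSr.
  have hD := D_le s hs.
  have hi : (0 <= mr ^+ i * iter i.+1 F s)%R.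
    by rewrite mulr_ge0 ?exprn_ge0 ?mr_ge0 // (andP (iterF01 i.+1 s hs)).1.
  rewrite exprS.
  have -> : (F s * (mr * mr ^+ i * iter i.+1 F s) = (mr * F s) * (mr ^+ i * iter i.+1 F s))%R by ring.
  by rewrite ler_wpM2r.
rewrite muleC [X in _ <= X]muleC lee_pmul2r // in hb.
Qed.

End Aux2.

Theorem lemma3 (R : realType) (p : nat -> R) (q : R) :
  is_pmf p ->
  (0 < p 0%N)%R ->
  1 < mean p < +oo ->
  (0 < q < 1)%R ->
  genfun p q = q%:E ->
  (forall (k n : nat), (1 <= n)%N ->
     prob_Z1_le (qlaw p q) k <= cond_Z1_le (qlaw p q) k n)
  /\
  (forall (i n : nat), (1 <= n)%N ->
     condexp_Zi (qlaw p q) i n <= mean (qlaw p q) ^+ i).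
Proof.
move=> [p0 _] pp0 _ /andP[q0 q1] gq.
set o := qlaw p q.
have o_ge0 k : (0 <= o k)%R by rewrite /o /qlaw !mulr_ge0 ?p0 ?invr_ge0 ?exprn_ge0 ?ltW.
have o0 : (0 < o 0%N)%R by rewrite /o /qlaw expr0 mulr1 mulr_gt0 ?invr_gt0.
have o_sum : \sum_(k <oo) (o k)%:E = 1.
  transitivity (\sum_(k <oo) (q^-1)%:E * (p k * q ^+ k)%:E).
    by apply: eq_eseriesr => k _; rewrite -EFinM /o /qlaw; congr (_%:E); ring.
  rewrite nneseriesZl; last by move=> k _; rewrite lee_fin mulr_ge0 ?p0 ?exprn_ge0 ?ltW.
  by rewrite -/(genfun p q) gq -EFinM mulVf ?gt_eqF.
have Fpos x : (0 <= x <= 1)%R -> (0 < F R o x)%R.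
  by move=> hx; have [_ /andP[h _]] := @F_prop R o o_ge0 o_sum x hx; exact: lt_le_trans h.
have h0 : (0 <= (0:R) <= 1)%R by rewrite lexx ler01.
have iter01 m x : (0 <= x <= 1)%R -> (0 <= iter m (F R o) x <= 1)%R.
  exact: (@iterF01 R o o_ge0 o_sum m x).
split.
  move=> k [//|n] _.
  set g := iter n (F R o) 0%R.
  have g01 : (0 <= g <= 1)%R by exact: iter01.
  have /andP[g0 g1] := g01.
  have eP : prob_Z1_le o k = (\sum_(0 <= a < k.+1) o a)%:E.
    rewrite /prob_Z1_le /probZ -sumEFin; apply: eq_bigr => a _.
    exact: (@kpow11 R o o_ge0).
  have eJ : \sum_(0 <= a < k.+1) jointZ o 1 n.+1 a 0 = (\sum_(0 <= a < k.+1) o a * g ^+ a)%:E.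
    rewrite -sumEFin; apply: eq_bigr => a _.
    rewrite /jointZ (@kpow11 R o o_ge0) /= subn1 /= (@kpow_a0 R o o_ge0 o_sum).
    by rewrite -EFinM.
  have eZ : probZ o n.+1 0 = (F R o g)%:E.
    by rewrite /probZ (@kpow_a0 R o o_ge0 o_sum) expr1.
  have Fg := Fpos g g01.
  rewrite /cond_Z1_le eP eJ eZ inver gt_eqF //= -EFinM lee_fin ler_pdivlMr //.
  set A := (\sum_(0 <= a < k.+1) o a)%R.
  set B := (\sum_(0 <= a < k.+1) o a * g ^+ a)%R.
  have tg a : 0 <= (o a * g ^+ a)%:E by rewrite lee_fin mulr_ge0 ?exprn_ge0.
  have to a : 0 <= (o a)%:E by rewrite lee_fin.
  have sF : (F R o g)%:E = B%:E + \sum_(k.+1 <= a <oo) (o a * g ^+ a)%:E.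
    rewrite -(@F_prop R o o_ge0 o_sum g g01).1 /Fe (nneseries_split 0 k.+1) // add0n.
    by rewrite sumEFin.
  have sO : 1 = A%:E + \sum_(k.+1 <= a <oo) (o a)%:E.
    by rewrite -o_sum (nneseries_split 0 k.+1) // add0n sumEFin.
  set Ct := \sum_(k.+1 <= a <oo) (o a * g ^+ a)%:E in sF.
  set T := \sum_(k.+1 <= a <oo) (o a)%:E in sO.
  have Ct0 : 0 <= Ct by apply: nneseries_ge0.
  have T0 : 0 <= T by apply: nneseries_ge0.
  have A0 : (0 <= A)%R by apply: sumr_ge0.
  have B0 : (0 <= B)%R by apply: sumr_ge0 => a _; rewrite mulr_ge0 ?exprn_ge0.
  have CtT : Ct <= (g ^+ k)%:E * T.
    rewrite /Ct /T -(@nneseriesZl R (fun a => (o a)%:E) xpredT (g ^+ k) k.+1); last by move=> a _; exact: to.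
    rewrite (@eseries_cond R (fun a => (o a * g ^+ a)%:E) xpredT k.+1) (@eseries_cond R (fun a => (g ^+ k)%:E * (o a)%:E) xpredT k.+1).
    apply: lee_nneseries => [a _ _|a /= ka]; first exact: tg.
    rewrite -EFinM lee_fin [leRHS]mulrC; apply: ler_wpM2l => //.
    exact: (ler_wiXn2l g0 g1 (ltnW ka)).
  have Tfin : T = (fine T)%:E.
    rewrite fineK //; apply/fin_numPlt; rewrite (lt_le_trans _ T0) ?ltNyr //=.
    apply: (@le_lt_trans _ _ 1); last by rewrite ltry.
    by rewrite sO leeDr // lee_fin.
  have Cfin : Ct = (fine Ct)%:E.
    rewrite fineK //; apply/fin_numPlt; rewrite (lt_le_trans _ Ct0) ?ltNyr //=.
    apply: (@le_lt_trans _ _ (F R o g)%:E); last by rewrite ltry.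
    by rewrite sF leeDr // lee_fin.
  rewrite Tfin in sO T0 CtT; rewrite Cfin in sF Ct0 CtT.
  rewrite -EFinD in sO sF; rewrite -EFinM in CtT.
  move: sO sF T0 Ct0 CtT => /(congr1 fine) /= sO /(congr1 fine) /= sF.
  rewrite !lee_fin => T0 Ct0 CtT.
  set Tr := fine T in sO T0 CtT; set Cr := fine Ct in sF Ct0 CtT.
  have gk0 : (0 <= g ^+ k)%R by rewrite exprn_ge0.
  have BA : (g ^+ k * A <= B)%R.
    rewrite /A /B mulr_sumr big_nat_cond [X in (_ <= X)%R]big_nat_cond.
    apply: ler_sum => a /andP[/andP[_ ak] _].
    rewrite mulrC; apply: ler_wpM2l => //.
    by apply: (ler_wiXn2l g0 g1); rewrite -ltnS.
  have h1 : (A * Cr <= A * (g ^+ k * Tr))%R by rewrite ler_wpM2l.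
  have h2 : (g ^+ k * A * Tr <= B * Tr)%R by rewrite ler_wpM2r.
  have h3 : (A * Cr <= B * Tr)%R by apply: (le_trans h1); rewrite mulrCA mulrA.
  have e : B = (B * A + B * Tr)%R by rewrite -mulrDr -sO mulr1.
  rewrite sF mulrDr [X in (_ <= X)%R]e (mulrC A B) lerD2l //.
move=> i n n1.
have m0 : 0 <= mean o by apply: nneseries_ge0 => k _ _; rewrite lee_fin mulr_ge0.
set V := iter n (F R o) 0%R.
have eZ : probZ o n 0 = V%:E by rewrite /probZ (@kpow_a0 R o o_ge0 o_sum) expr1.
have V0 : (0 < V)%R.
  by rewrite /V; case: n n1 {eZ V} => [//|n] _ /=; apply: Fpos; apply: iter01.
have [iltn|ngei] := ltnP i n; last first.
  have eN : \sum_(a <oo) (a%:R)%:E * jointZ o i n a 0 = 0.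
    apply: eseries0 => a _ _; rewrite /jointZ; case: ifP => hin.
      have -> : (n - i = 0)%N by apply/eqP; rewrite subn_eq0.
      rewrite /=; case: a => [|a] /=; first by rewrite mul0e.
      by rewrite mulr0n mule0 mule0.
    rewrite (@kpow0 R o o_ge0); case: a => [|a] /=; first by rewrite mul0e.
    by rewrite mulr0n mule0 mule0.
  by rewrite /condexp_Zi eN mul0e; apply: expe_ge0.
set g := iter (n - i) (F R o) 0%R.
have g01 : (0 <= g <= 1)%R by exact: iter01.
have eN : \sum_(a <oo) (a%:R)%:E * jointZ o i n a 0 = Wt R o i g.
  rewrite /Wt; apply: eq_eseriesr => a _.
  by rewrite /jointZ (ltnW iltn) /= (@kpow_a0 R o o_ge0 o_sum).
have eV : V = iter i (F R o) g.
  by rewrite /V /g -{1}(subnKC (ltnW iltn)) iterD.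
rewrite /condexp_Zi eN eZ inver gt_eqF //=.
have Vi0 : (0 <= V^-1)%R by rewrite invr_ge0 ltW.
have := m0; rewrite /mean; case E : (\sum_(k <oo) _) => [mr| |] // _.
  have hW := @Wt_bound R o o_ge0 o_sum o0 mr E i g g01.
  rewrite -eV in hW.
  apply: (le_trans (lee_wpmul2r _ hW)); first by rewrite lee_fin.
  by rewrite -EFinM mulfK ?gt_eqF // EFin_expe.
have ey j : (+oo : \bar R) ^+ j.+1 = +oo.
  by elim: j => [|j IH]; rewrite expeS ?expe0 ?mule1 // IH mulyy.
move: eV; case: i iltn {eN g01} g => [|i] _ g eV; last by rewrite ey leey.
have gV : g = V by rewrite eV.
rewrite gV Wt0 /= ?(ltW V0) // -EFinM mulfV ?gt_eqF //.
Qed.
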